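(* For the system $S'=\Lambda-\beta\frac{SB}{B+D}-(\mu+\psi)S+wR$, $V'=\psi S-\sigma\beta\frac{VB}{B+D}-\mu V$, $I'=\beta\frac{SB}{B+D}+\sigma\beta\frac{VB}{B+D}-(\mu+\gamma)I$, $R'=\gamma I-(\mu+w)R$, $B'=\eta I-\delta B$, there exist parameter values for which ${\cal R}_0<1$ and there exist exactly two positive steady states, one stable and one unstable.
   Context: All parameters $\Lambda,\beta,D,\mu,\psi,w,\sigma,\gamma,\eta,\delta$ are positive constants. The disease-free equilibrium is $(S_0,V_0,0,0,0)$ with $S_0=\frac{\Lambda}{\mu+\psi}$, $V_0=\frac{\Lambda\psi}{\mu(\mu+\psi)}$, and the basic reproductive ratio is ${\cal R}_0=\frac{\eta\beta(S_0+\sigma V_0)}{D\delta(\mu+\gamma)}$. A positive steady state is a steady state with all components positive. *)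

(* Defs.v *)
From HB Require Import structures.
From mathcomp Require Import all_boot all_order all_algebra complex.
From mathcomp Require Import Rstruct.
From Stdlib Require Import Reals.
Set Implicit Arguments. Unset Strict Implicit. Unset Printing Implicit Defensive.
Import Order.TTheory GRing.Theory Num.Theory.
Local Open Scope ring_scope.

Notation R := Rdefinitions.R.

Record params := Params {
  pLambda : R; pbeta : R; pD : R; pmu : R; ppsi : R;
  pw : R; psigma : R; pgamma : R; peta : R; pdelta : R }.

Definition params_pos (p : params) : Prop :=
  0 < pLambda p /\ 0 < pbeta p /\ 0 < pD p /\ 0 < pmu p /\ 0 < ppsi p /\
  0 < pw p /\ 0 < psigma p /\ 0 < pgamma p /\ 0 < peta p /\ 0 < pdelta p.

Record state := State { xS : R; xV : R; xI : R; xR : R; xB : R }.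

Definition state_pos (x : state) : Prop :=
  0 < xS x /\ 0 < xV x /\ 0 < xI x /\ 0 < xR x /\ 0 < xB x.

Section Model.
Variable p : params.
Local Notation Lambda := (pLambda p). Local Notation beta := (pbeta p).
Local Notation D := (pD p). Local Notation mu := (pmu p).
Local Notation psi := (ppsi p). Local Notation w := (pw p).
Local Notation sigma := (psigma p). Local Notation gamma := (pgamma p).
Local Notation eta := (peta p). Local Notation delta := (pdelta p).

Definition fS (x : state) : R :=
  Lambda - beta * (xS x * xB x / (xB x + D)) - (mu + psi) * xS x + w * xR x.
Definition fV (x : state) : R :=
  psi * xS x - sigma * beta * (xV x * xB x / (xB x + D)) - mu * xV x.
Definition fI (x : state) : R :=
  beta * (xS x * xB x / (xB x + D)) + sigma * beta * (xV x * xB x / (xB x + D))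
  - (mu + gamma) * xI x.
Definition fR (x : state) : R := gamma * xI x - (mu + w) * xR x.
Definition fB (x : state) : R := eta * xI x - delta * xB x.

Definition steady_state (x : state) : Prop :=
  fS x = 0 /\ fV x = 0 /\ fI x = 0 /\ fR x = 0 /\ fB x = 0.

Definition positive_steady_state (x : state) : Prop :=
  steady_state x /\ state_pos x.

(* disease-free equilibrium components and basic reproductive ratio *)
Definition S0 : R := Lambda / (mu + psi).
Definition V0 : R := Lambda * psi / (mu * (mu + psi)).
Definition basic_repr_ratio : R := eta * beta * (S0 + sigma * V0) / (D * delta * (mu + gamma)).

Definition jac_entry (x : state) (i j : nat) : R :=
  let S := xS x in let V := xV x in let B := xB x in
  let g := B / (B + D) in let g' := D / ((B + D) ^+ 2) in
  match i, j with
  | 0, 0 => - beta * g - (mu + psi)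
  | 0, 3 => w
  | 0, 4 => - beta * S * g'
  | 1, 0 => psi
  | 1, 1 => - sigma * beta * g - mu
  | 1, 4 => - sigma * beta * V * g'
  | 2, 0 => beta * g
  | 2, 1 => sigma * beta * g
  | 2, 2 => - (mu + gamma)
  | 2, 4 => beta * S * g' + sigma * beta * V * g'
  | 3, 2 => gamma
  | 3, 3 => - (mu + w)
  | 4, 2 => eta
  | 4, 4 => - delta
  | _, _ => 0
  end%N.

Definition jacobian (x : state) : 'M[R]_5 :=
  \matrix_(i < 5, j < 5) jac_entry x i j.

Definition jacobianC (x : state) : 'M[R[i]]_5 :=
  map_mx (fun r : R => (r%:C)%C) (jacobian x).

(* (linear, local asymptotic) stability: all eigenvalues of the Jacobian
   have negative real part; instability: some eigenvalue has positive real part *)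
Definition stable_ss (x : state) : Prop :=
  forall l : R[i], eigenvalue (jacobianC x) l -> complex.Re l < 0.
Definition unstable_ss (x : state) : Prop :=
  exists l : R[i], eigenvalue (jacobianC x) l /\ 0 < complex.Re l.

End Model.

(* Main.v *)
Require Import Defs.
From HB Require Import structures.
From mathcomp Require Import all_boot all_order all_algebra complex.
From mathcomp Require Import Rstruct.
From Stdlib Require Import Reals Lra Psatz.
Ltac slra := lra.
Ltac snra := nra.
Ltac sfield := field.
Ltac sring := ring.
From mathcomp Require Import ring lra.
Import Order.TTheory GRing.Theory Num.Theory.
Local Open Scope ring_scope.
Ltac toS := rewrite -?RplusE -?RoppE -?RmultE -?RinvE -?R0E -?R1E;
  try match goal with |- ?a = ?b => change (@eq Rdefinitions.R a b) end.
Ltac toSh H := rewrite -?RplusE -?RoppE -?RmultE -?RinvE -?R0E -?R1E in H;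
  try match type of H with ?a = ?b => change (@eq Rdefinitions.R a b) in H end.
Ltac toSh2 H := rewrite -?RplusE -?RoppE -?RmultE -?RinvE -?R0E -?R1E -?RpowE in H;
  try match type of H with ?a = ?b => change (@eq Rdefinitions.R a b) in H end.
Ltac toS2 := rewrite -?RplusE -?RoppE -?RmultE -?RinvE -?R0E -?R1E -?RpowE;
  try match goal with |- ?a = ?b => change (@eq Rdefinitions.R a b) end.

Definition p0 : params := Params (IZR 2779 / IZR 8800) (IZR 10) (IZR 6) (IZR 1 / IZR 10) (IZR 1)
  (IZR 3434 / IZR 35) (IZR 1 / IZR 10) (IZR 10) (IZR 101 / IZR 30) (IZR 1 / IZR 3).
Definition x1 : state := State (IZR 671 / IZR 720) (IZR 121 / IZR 72) (IZR 50 / IZR 101) (IZR 56 / IZR 1111) (IZR 5).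
Definition x2 : state := State (IZR 4331 / IZR 13200) (IZR 3721 / IZR 1320) (IZR 1 / IZR 101) (IZR 28 / IZR 27775) (IZR 1 / IZR 10).

Lemma p0_pos : params_pos p0.
Proof. rewrite /params_pos /=; repeat split; apply/RltP; toS2; slra. Qed.

Lemma R0_lt1 : basic_repr_ratio p0 < 1.
Proof.
apply/RltP. rewrite /basic_repr_ratio /S0 /V0 /=. toS2.
match goal with |- Rlt ?a _ => have E : @eq Rdefinitions.R a (Rdiv (IZR 2779) (IZR 2904)) by sfield end; rewrite E; slra.
Qed.

Ltac ssolve := rewrite /fS /fV /fI /fR /fB /=; toS2; sfield; repeat split; slra.
Lemma x1_ss : positive_steady_state p0 x1.
Proof. split; [repeat split; ssolve | rewrite /state_pos /=; repeat split; apply/RltP; toS2; slra]. Qed.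
Lemma x2_ss : positive_steady_state p0 x2.
Proof. split; [repeat split; ssolve | rewrite /state_pos /=; repeat split; apply/RltP; toS2; slra]. Qed.
Lemma x12 : x1 <> x2.
Proof. move=> /(congr1 xB) /= H. toSh2 H. slra. Qed.
Notation "'!' n" := (IZR n%Z) (at level 0, n at level 0, format "'!' n").

Lemma uniq_ss x : positive_steady_state p0 x -> x = x1 \/ x = x2.
Proof.
case: x => S V I Rr B [[hS [hV [hI [hR hB]]]] hp].
move: hp; rewrite /state_pos /= => -[/RltP pS [/RltP pV [/RltP pI [/RltP pR /RltP pB]]]].
toSh2 pS; toSh2 pV; toSh2 pI; toSh2 pR; toSh2 pB.
have eI : I = !10 / !101 * B.
  move: hB; rewrite /fB /= => H; toSh2 H; toS2; slra.
have eR : Rr = !28 / !275 * I.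
  move: hR; rewrite /fR /= => H; toSh2 H; toS2; slra.
set num1 := !10 * B + !11 / !10 * (B + !6).
set num2 := B + !1 / !10 * (B + !6).
set G := !10 * B * (!2779 / !8800 + !3434 / !35 * Rr) * (num2 + !1 / !10 * (B + !6))
   - (!1 / !10 + !10) * I * num1 * num2.
have e : (B + !6) * G = num1 * num2 * (fI p0 (State S V I Rr B) * (B + !6))
   + !10 * B * num2 * (fS p0 (State S V I Rr B) * (B + !6))
   + B * num1 * (fV p0 (State S V I Rr B) * (B + !6))
   + B * (B + !6) * (fS p0 (State S V I Rr B) * (B + !6)).
  rewrite /G /num1 /num2 /fS /fV /fI /=. toS2. sfield. slra.
rewrite hS hV hI in e.
have G0 : G = 0.
  have : (B + !6) * G = 0 by rewrite e; toS2; sring.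
  move=> H; toSh2 H. toS2. case: (Rmult_integral _ _ H) => //. slra.
have E2 : B * ((B - !1 / !10) * (B - !5)) = - (!44 / !15) * G.
  rewrite /G /num1 /num2 eR eI. toS2. sfield.
rewrite G0 in E2. toSh2 E2.
have E3 : Rmult B (Rmult (Rminus B (Rdiv (IZR 1) (IZR 10))) (Rminus B (IZR 5))) = IZR 0.
  rewrite E2. sring.
have eS0 : S * num1 - (!2779 / !8800 + !3434 / !35 * Rr) * (B + !6) = - (fS p0 (State S V I Rr B)) * (B + !6).
  rewrite /num1 /fS /=; toS2; sfield; slra.
have eV0 : V * num2 - S * (B + !6) = - (fV p0 (State S V I Rr B)) * (B + !6).
  rewrite /num2 /fV /=; toS2; sfield; slra.
rewrite hS in eS0. rewrite hV in eV0. rewrite /num1 in eS0. rewrite /num2 in eV0.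
toSh2 eS0. toSh2 eV0. toSh2 eI. toSh2 eR.
clear e G0 E2 G num1 num2 hS hV hI hR hB.
case: (Rmult_integral _ _ E3) => [hB0|E4]; first by slra.
case: (Rmult_integral _ _ E4) => hBv.
- right. have eB : B = Rdiv (IZR 1) (IZR 10) by slra.
  subst B. rewrite /x2. f_equal; toS2; slra.
- left. have eB : B = IZR 5 by slra.
  subst B. rewrite /x1. f_equal; toS2; slra.
Qed.

Definition i0 : 'I_5 := @Ordinal 5 0 isT.
Definition i1 : 'I_5 := @Ordinal 5 1 isT.
Definition i2 : 'I_5 := @Ordinal 5 2 isT.
Definition i3 : 'I_5 := @Ordinal 5 3 isT.
Definition i4 : 'I_5 := @Ordinal 5 4 isT.
Lemma sum5 (K : pzRingType) (F : 'I_5 -> K) : \sum_(k < 5) F k = F i0 + F i1 + F i2 + F i3 + F i4.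
Proof.
rewrite !big_ord_recr big_ord0 /= add0r.
by congr (_ + _ + _ + _ + _); congr F; apply: val_inj.
Qed.
Lemma row5 (K : pzRingType) (A : 'M[K]_5) (v : 'rV[K]_5) (l : K) (j : 'I_5) :
  v *m A = l *: v -> v 0 i0 * A i0 j + v 0 i1 * A i1 j + v 0 i2 * A i2 j + v 0 i3 * A i3 j + v 0 i4 * A i4 j = l * v 0 j.
Proof. move=> H. have := congr1 (fun M : 'rV[K]_5 => M 0 j) H. rewrite /= !mxE sum5. done. Qed.
Lemma ord5P (P : 'I_5 -> Prop) : P i0 -> P i1 -> P i2 -> P i3 -> P i4 -> forall j, P j.
Proof.
move=> h0 h1 h2 h3 h4 [[|[|[|[|[|n]]]]] hn].
- by rewrite (_ : Ordinal hn = i0) //; apply: val_inj.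
- by rewrite (_ : Ordinal hn = i1) //; apply: val_inj.
- by rewrite (_ : Ordinal hn = i2) //; apply: val_inj.
- by rewrite (_ : Ordinal hn = i3) //; apply: val_inj.
- by rewrite (_ : Ordinal hn = i4) //; apply: val_inj.
- by [].
Qed.

Definition charP (K : pzRingType) (A : 'M[K]_5) (l : K) : K :=
  let a0 := l - A i0 i0 in let a1 := l - A i1 i1 in let a2 := l - A i2 i2 in
  let a3 := l - A i3 i3 in let a4 := l - A i4 i4 in
  let AA := A i1 i0 * A i2 i1 + A i2 i0 * a1 in
  a0*a1*a3*a4*a2 - A i3 i2 * A i0 i3 * a4 * AA
  - A i4 i2 * a3 * (A i0 i4 * AA + A i1 i4 * A i2 i1 * a0 + A i2 i4 * a0 * a1).

Arguments charP {K}.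
Arguments row5 {K}.
Arguments sum5 {K}.
Lemma eig_char (K : fieldType) (A : 'M[K]_5) l (v : 'rV[K]_5) :
  v *m A = l *: v -> v != 0 ->
  A i3 i0 = 0 -> A i4 i0 = 0 -> A i0 i1 = 0 -> A i3 i1 = 0 -> A i4 i1 = 0 ->
  A i0 i2 = 0 -> A i1 i2 = 0 -> A i1 i3 = 0 -> A i2 i3 = 0 -> A i4 i3 = 0 ->
  A i3 i4 = 0 ->
  l - A i0 i0 != 0 -> l - A i1 i1 != 0 -> l - A i3 i3 != 0 -> l - A i4 i4 != 0 ->
  charP A l = 0.
Proof.
move=> Hv nz z30 z40 z01 z31 z41 z02 z12 z13 z23 z43 z34 n0 n1 n3 n4.
have E0 := @row5 _ _ _ _ i0 Hv. have E1 := @row5 _ _ _ _ i1 Hv. have E2 := @row5 _ _ _ _ i2 Hv.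
have E3 := @row5 _ _ _ _ i3 Hv. have E4 := @row5 _ _ _ _ i4 Hv.
rewrite z30 z40 in E0. rewrite z01 z31 z41 in E1. rewrite z02 z12 in E2.
rewrite z13 z23 z43 in E3. rewrite z34 in E4.
move: E0 E1 E2 E3 E4.
set v0 := v 0 i0; set v1 := v 0 i1; set v2 := v 0 i2; set v3 := v 0 i3; set v4 := v 0 i4.
move=> E0 E1 E2 E3 E4.
have R0 : v0 * A i0 i0 + v1 * A i1 i0 + v2 * A i2 i0 + v3 * 0 + v4 * 0 - l * v0 = 0 by rewrite E0 subrr.
have R1 : v0 * 0 + v1 * A i1 i1 + v2 * A i2 i1 + v3 * 0 + v4 * 0 - l * v1 = 0 by rewrite E1 subrr.
have R2 : v0 * 0 + v1 * 0 + v2 * A i2 i2 + v3 * A i3 i2 + v4 * A i4 i2 - l * v2 = 0 by rewrite E2 subrr.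
have R3 : v0 * A i0 i3 + v1 * 0 + v2 * 0 + v3 * A i3 i3 + v4 * 0 - l * v3 = 0 by rewrite E3 subrr.
have R4 : v0 * A i0 i4 + v1 * A i1 i4 + v2 * A i2 i4 + v3 * 0 + v4 * A i4 i4 - l * v4 = 0 by rewrite E4 subrr.
move: R0 R1 R2 R3 R4.
set r0 := _ - l * v0; set r1 := _ - l * v1; set r2 := _ - l * v2; set r3 := _ - l * v3; set r4 := _ - l * v4.
move=> R0 R1 R2 R3 R4.
have v2nz : v2 != 0.
  apply: contraNneq nz => v20. apply/eqP/rowP; apply: ord5P; rewrite mxE.
  - have : (l - A i0 i0) * v0 = A i1 i0 * v1 + A i2 i0 * v2 - r0 by rewrite /r0; ring.
    have : (l - A i1 i1) * v1 = A i2 i1 * v2 - r1 by rewrite /r1; ring.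
    rewrite v20 R1 !mulr0 ?subr0 => /eqP; rewrite mulf_eq0 (negPf n1) /= => /eqP ->.
    rewrite R0 !mulr0 ?subr0 ?addr0 => /eqP; rewrite mulf_eq0 (negPf n0) /= => /eqP h; exact: h.
  - have : (l - A i1 i1) * v1 = A i2 i1 * v2 - r1 by rewrite /r1; ring.
    rewrite v20 R1 !mulr0 ?subr0 => /eqP; rewrite mulf_eq0 (negPf n1) /= => /eqP h; exact: h.
  - exact: v20.
  - have : (l - A i0 i0) * v0 = A i1 i0 * v1 + A i2 i0 * v2 - r0 by rewrite /r0; ring.
    have : (l - A i1 i1) * v1 = A i2 i1 * v2 - r1 by rewrite /r1; ring.
    rewrite v20 R1 !mulr0 ?subr0 => /eqP; rewrite mulf_eq0 (negPf n1) /= => /eqP ev1.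
    rewrite ev1 R0 !mulr0 ?subr0 ?addr0 => /eqP; rewrite mulf_eq0 (negPf n0) /= => /eqP ev0.
    have : (l - A i3 i3) * v3 = A i0 i3 * v0 - r3 by rewrite /r3; ring.
    rewrite ev0 R3 !mulr0 ?subr0 => /eqP; rewrite mulf_eq0 (negPf n3) /= => /eqP h; exact: h.
  - have : (l - A i0 i0) * v0 = A i1 i0 * v1 + A i2 i0 * v2 - r0 by rewrite /r0; ring.
    have : (l - A i1 i1) * v1 = A i2 i1 * v2 - r1 by rewrite /r1; ring.
    rewrite v20 R1 !mulr0 ?subr0 => /eqP; rewrite mulf_eq0 (negPf n1) /= => /eqP ev1.
    rewrite ev1 R0 !mulr0 ?subr0 ?addr0 => /eqP; rewrite mulf_eq0 (negPf n0) /= => /eqP ev0.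
    have : (l - A i4 i4) * v4 = A i0 i4 * v0 + A i1 i4 * v1 + A i2 i4 * v2 - r4 by rewrite /r4; ring.
    rewrite ev0 ev1 v20 R4 !mulr0 ?addr0 ?subr0 => /eqP; rewrite mulf_eq0 (negPf n4) /= => /eqP h; exact: h.
have key : charP A l * v2 =
  - ((l - A i0 i0) * (l - A i1 i1) * (l - A i3 i3) * (l - A i4 i4)) * r2
  - A i3 i2 * A i0 i3 * (l - A i4 i4) * (A i1 i0 * r1 + (l - A i1 i1) * r0)
  - (l - A i0 i0) * (l - A i1 i1) * (l - A i4 i4) * A i3 i2 * r3
  - A i4 i2 * (l - A i3 i3) * (A i0 i4 * A i1 i0 * r1 + A i0 i4 * (l - A i1 i1) * r0 + A i1 i4 * (l - A i0 i0) * r1)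
  - (l - A i0 i0) * (l - A i1 i1) * (l - A i3 i3) * A i4 i2 * r4.
  rewrite /charP /r0 /r1 /r2 /r3 /r4; ring.
have key0 : charP A l * v2 = 0 by rewrite key R0 R1 R2 R3 R4; ring.
by move/eqP: key0; rewrite mulf_eq0 (negPf v2nz) orbF => /eqP.
Qed.
Definition qa : R := !24097 / !210.
Definition qb : R := !429811121 / !254100.
Definition qc : R := !368179 / !165.
Definition qd : R := !441875 / !1936.
Definition Req (x y : R) : R := x ^+ 4 - !6 * x ^+ 2 * y ^+ 2 + y ^+ 4 + qa * (x ^+ 3 - !3 * x * y ^+ 2)
  + qb * (x ^+ 2 - y ^+ 2) + qc * x + qd.
Definition Jq (x y : R) : R := !4 * x ^+ 3 - !4 * x * y ^+ 2 + qa * (!3 * x ^+ 2 - y ^+ 2) + !2 * qb * x + qc.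

Lemma quart_ok (x y : R) : 0 <= x -> Req x y = 0 -> y * Jq x y = 0 -> False.
Proof.
move=> /RleP hx hR hJ. rewrite -R0E in hx.
have h2 := pow_le x 2 hx. have h3 := pow_le x 3 hx. have h4 := pow_le x 4 hx.
have h5 := pow_le x 5 hx. have h6 := pow_le x 6 hx.
move/eqP: hJ; rewrite mulf_eq0 => /orP [/eqP y0 | /eqP J0].
- rewrite y0 /Req /qa /qb /qc /qd in hR. toSh2 hR. slra.
- have Hres : (!4277702379231912187 / !10062360000) * x ^+ 0 + (!4848575557273482708077 / !6779515050000) * x ^+ 1 + (!64622926838912334499 / !338975752500) * x ^+ 2 + (!2563068938591341 / !140072625) * x ^+ 3 + (!305111480732 / !444675) * x ^+ 4 + (!385552 / !35) * x ^+ 5 + !64 * x ^+ 6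
     = - (Req x y * (!4 * x + qa) ^+ 2 + Jq x y * (- (!6 * x ^+ 2 + !3 * qa * x + qb) * (!4 * x + qa) + y ^+ 2 * (!4 * x + qa) + (!4 * x ^+ 3 + !3 * qa * x ^+ 2 + !2 * qb * x + qc))).
    rewrite /Req /Jq /qa /qb /qc /qd. toS2. sfield.
  rewrite hR J0 in Hres. toSh2 Hres. slra.
Qed.

Lemma jC p x (i j : 'I_5) : jacobianC p x i j = ((jac_entry p x i j)%:C)%C.
Proof. by rewrite !mxE. Qed.

Lemma x1_stable : stable_ss p0 x1.
Proof.
move=> l /eigenvalueP [v Hv nz].
case: l Hv => x y Hv /=.
rewrite ltNge; apply/negP => hx.
have nzd : forall c : R, c < 0 -> (x +i* y)%C - (c%:C)%C != 0.
  move=> c /RltP hc; apply/eqP => /(congr1 (@complex.Re R)) /= H. toSh2 H. rewrite -R0E in hc.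
  move/RleP: hx; rewrite -R0E => hx. slra.
have hP := @eig_char _ _ _ _ Hv nz.
have {}hP : charP (jacobianC p0 x1) (x +i* y)%C = 0.
  apply: hP; rewrite ?jC //; apply: nzd; apply/RltP; rewrite /=; toS2; slra.
have k1 : (x + !1 / !10) * complex.Re (charP (jacobianC p0 x1) (x +i* y)%C)
   + y * complex.Im (charP (jacobianC p0 x1) (x +i* y)%C)
   = ((x + !1 / !10) ^+ 2 + y ^+ 2) * Req x y.
  rewrite /charP !jC /Req /qa /qb /qc /qd /=. toS2. sfield.
have k2 : - y * complex.Re (charP (jacobianC p0 x1) (x +i* y)%C)
   + (x + !1 / !10) * complex.Im (charP (jacobianC p0 x1) (x +i* y)%C)
   = ((x + !1 / !10) ^+ 2 + y ^+ 2) * (y * Jq x y).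
  rewrite /charP !jC /Jq /qa /qb /qc /qd /=. toS2. sfield.
rewrite hP /= in k1 k2.
have pos : ((x + !1 / !10) ^+ 2 + y ^+ 2) != 0.
  apply/eqP => H. toSh2 H. move/RleP: hx; rewrite -R0E => hx.
  have := pow2_ge_0 y. snra.
apply: (@quart_ok x y hx).
- by move: k1; rewrite !mulr0 addr0 => /esym /eqP; rewrite mulf_eq0 (negPf pos) /= => /eqP.
- by move: k2; rewrite !mulr0 addr0 => /esym /eqP; rewrite mulf_eq0 (negPf pos) /= => /eqP.
Qed.

Lemma x2_unstable : unstable_ss p0 x2.
Proof.
pose e0 : R := - (!441875 / !29768).
pose e1 : R := !28463206807 / !24558600.
pose e2 : R := !9094684301 / !7814100.
pose e3 : R := !1408177 / !12810.
pose q : {poly R} := 'X^4 + e3%:P * 'X^3 + e2%:P * 'X^2 + e1%:P * 'X + e0%:P.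
have hq : forall z, q.[z] = z ^+ 4 + e3 * z ^+ 3 + e2 * z ^+ 2 + e1 * z + e0.
  by move=> z; rewrite /q !hornerE.
have [l /andP [l0 l1] rl] : exists2 l, 0 <= l <= 1 & root q l.
  apply: (@poly_ivt R q 0 1); first exact: ler01.
  rewrite !hq; apply/andP; split; apply/RleP; rewrite /e0 /e1 /e2 /e3; toS2; slra.
have ql : l ^+ 4 + e3 * l ^+ 3 + e2 * l ^+ 2 + e1 * l + e0 = 0 by rewrite -hq; apply/eqP.
have lpos : 0 < l.
  move: l0; rewrite le_eqVlt => /orP [/eqP l_0 | //].
  rewrite -l_0 in ql. move: ql; rewrite /e0 /e1 /e2 /e3 => H. toSh2 H. slra.
have lp : Rlt (IZR 0) l by move/RltP: lpos; rewrite -R0E.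
exists ((l%:C)%C); split; last by [].
rewrite (_ : jacobianC p0 x2 = map_mx (real_complex R) (jacobian p0 x2)) //.
rewrite eigenvalue_map.
pose v1 : R := (!1 / !61) / (l + !71 / !610).
pose v0 : R := (v1 + !10 / !61) / (l + !771 / !610).
pose v3 : R := (!3434 / !35) * v0 / (l + !1375 / !14).
pose v4 : R := (- (!355 / !671) * v0 - (!5 / !11) * v1 + !60 / !61) / (l + !1 / !3).
apply/eigenvalueP.
exists (\row_(j < 5) [:: v0; v1; 1; v3; v4]`_j).
- apply/rowP; apply: ord5P; rewrite !mxE sum5 !mxE /=.
  + rewrite /v4 /v3 /v0 /v1. toS2. sfield. repeat split; slra.
  + rewrite /v4 /v3 /v0 /v1. toS2. sfield. repeat split; slra.
  + apply: (@eq_trans _ _ (l * 1 - (l + !1 / !10) * (l ^+ 4 + e3 * l ^+ 3 + e2 * l ^+ 2 + e1 * l + e0)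
        / ((l + !771 / !610) * (l + !71 / !610) * (l + !1375 / !14) * (l + !1 / !3)))).
    * rewrite /v4 /v3 /v0 /v1 /e0 /e1 /e2 /e3. toS2. sfield. repeat split; slra.
    * rewrite ql. toS2. sfield. repeat split; slra.
  + rewrite /v4 /v3 /v0 /v1. toS2. sfield. repeat split; slra.
  + rewrite /v4 /v3 /v0 /v1. toS2. sfield. repeat split; slra.
- apply/eqP => /rowP /(_ i2); rewrite !mxE /= => /eqP; rewrite oner_eq0.
  done.
Qed.

Theorem theorem2 :
  exists p : params,
    params_pos p /\ basic_repr_ratio p < 1 /\
    exists x1 x2 : state,
      x1 <> x2 /\
      positive_steady_state p x1 /\ positive_steady_state p x2 /\
      (forall x : state, positive_steady_state p x -> x = x1 \/ x = x2) /\
      stable_ss p x1 /\ unstable_ss p x2.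
Proof.
exists p0; split; first exact: p0_pos.
split; first exact: R0_lt1.
exists x1, x2; split; first exact: x12.
split; first exact: x1_ss.
split; first exact: x2_ss.
split; first exact: uniq_ss.
split; first exact: x1_stable.
exact: x2_unstable.
Qed.
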